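(* For an integer $k\ge1$ and a structure function $s$ (as defined in the context) of a unit vector with at most $k$ nonzero entries, define $$ A(s) := \max_{1\le p \le k} p\, s^2(p),\qquad B(s) := \min_{1\le p \le k} \max\{p^2s^2(p),\ k\, s(p)\}. $$ Then: (i) for every such structure function $s$, $A(s)\le B(s)$; (ii) there exists a sequence of unit vectors $\mathbf{v}^{(k)}$, $k=1,2,\dots$, with $\mathbf{v}^{(k)}$ having at most $k$ nonzero entries and structure function $s_k$, such that $\lim_{k\to\infty} B(s_k)/A(s_k)=\infty$.
   Context: For a unit vector $\mathbf{v}\in\mathbb{R}^n$ with at most $k$ nonzero entries, let $v_{(1)}\ge v_{(2)}\ge\cdots$ be the absolute values of its entries sorted in decreasing order, and define its signal-energy structure function $s(p)=\big(\sum_{i=1}^p v_{(i)}^2\big)^{-1}$ for $1\le p\le k$. *)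

(* Defs.v *)
From HB Require Import structures.
From mathcomp Require Import all_boot all_order all_algebra.
From mathcomp Require Import all_classical all_reals all_analysis.
Set Implicit Arguments. Unset Strict Implicit. Unset Printing Implicit Defensive.
Import Order.TTheory GRing.Theory Num.Theory.
Local Open Scope ring_scope.

Section Defs.
Variable R : realType.

Definition unit_vec (n : nat) (v : 'I_n -> R) : Prop :=
  \sum_(i < n) v i ^+ 2 = 1.

Definition sparse (k n : nat) (v : 'I_n -> R) : Prop :=
  let supp := [pred i | v i != 0] in (#|supp| <= k)%N.

(* absolute values of the entries sorted in decreasing order:
   v_(1) = nth 0 (sorted_abs v) 0, v_(2) = nth 0 (sorted_abs v) 1, ... *)
Definition sorted_abs (n : nat) (v : 'I_n -> R) : seq R :=
  sort (fun x y : R => y <= x) [seq `|v i| | i <- enum 'I_n].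

Definition strfun (n : nat) (v : 'I_n -> R) (p : nat) : R :=
  (\sum_(i < p) (nth (0:R) (sorted_abs v) i) ^+ 2)^-1.

Definition Aval (k : nat) (s : nat -> R) : R :=
  \big[Num.max/ 1%:R * s 1%N ^+ 2]_(1 <= p < k.+1) (p%:R * s p ^+ 2).

Definition Bval (k : nat) (s : nat -> R) : R :=
  \big[Num.min/ Num.max (1%:R ^+ 2 * s 1%N ^+ 2) (k%:R * s 1%N)]_(1 <= p < k.+1)
     Num.max (p%:R ^+ 2 * s p ^+ 2) (k%:R * s p).

End Defs.

(* Main.v *)
Require Import Defs.
From HB Require Import structures.
From mathcomp Require Import all_boot all_order all_algebra.
From mathcomp Require Import all_classical all_reals all_analysis.
From mathcomp Require Import lra zify.
Import Order.TTheory GRing.Theory Num.Theory.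
Local Open Scope classical_set_scope.
Local Open Scope ring_scope.
Set Implicit Arguments. Unset Strict Implicit.

Section P1.
Variable R : realType.

Lemma count_enum_card n (P : pred 'I_n) : count P (enum 'I_n) = #|P|.
Proof. rewrite cardE -size_filter; congr size; rewrite enumT /enum_mem; exact: eq_filter. Qed.

Lemma sa_sorted n (v : 'I_n -> R) : sorted (fun x y : R => y <= x) (sorted_abs v).
Proof. apply: sort_sorted => x y; exact: le_total. Qed.

Lemma sa_perm n (v : 'I_n -> R) : perm_eq (sorted_abs v) [seq `|v i| | i <- enum 'I_n].
Proof. by rewrite /sorted_abs perm_sort. Qed.

Lemma sa_ge0 n (v : 'I_n -> R) i : 0 <= nth 0 (sorted_abs v) i.
Proof.
case: (ltnP i (size (sorted_abs v))) => hi; last by rewrite nth_default.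
have : nth 0 (sorted_abs v) i \in [seq `|v i| | i <- enum 'I_n].
  by rewrite -(perm_mem (sa_perm v)) mem_nth.
by case/mapP => j _ ->.
Qed.

Lemma sa_mono n (v : 'I_n -> R) i j : (i <= j)%N ->
  nth 0 (sorted_abs v) j <= nth 0 (sorted_abs v) i.
Proof.
move=> hij.
case: (ltnP j (size (sorted_abs v))) => hj; last first.
  by rewrite (nth_default _ hj) sa_ge0.
have tr : transitive (fun x y : R => y <= x) by move=> x y z /= h1 h2; exact: le_trans h2 h1.
have rf : reflexive (fun x y : R => y <= x) by move=> x /=.
apply: (sorted_leq_nth tr rf 0 (sa_sorted v)) => //.
by rewrite inE; exact: leq_ltn_trans hij hj.
Qed.

Definition bb n (v : 'I_n -> R) i := nth 0 (sorted_abs v) i ^+ 2.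
Definition SS n (v : 'I_n -> R) p := \sum_(i < p) bb v i.

Lemma bb_ge0 n (v : 'I_n -> R) i : 0 <= bb v i.
Proof. by rewrite /bb sqr_ge0. Qed.

Lemma bb_mono n (v : 'I_n -> R) i j : (i <= j)%N -> bb v j <= bb v i.
Proof.
move=> h; rewrite /bb; have := sa_mono v h; have := sa_ge0 v i; have := sa_ge0 v j.
move=> a b c; nra.
Qed.

Lemma SS_ge0 n (v : 'I_n -> R) p : 0 <= SS v p.
Proof. by apply: sumr_ge0 => i _; exact: bb_ge0. Qed.

Lemma SS_S n (v : 'I_n -> R) p : SS v p.+1 = SS v p + bb v p.
Proof. by rewrite /SS big_ord_recr. Qed.

Lemma SS_mono n (v : 'I_n -> R) p q : (p <= q)%N -> SS v p <= SS v q.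
Proof.
elim: q => [|q IH]; first by rewrite leqn0 => /eqP ->.
rewrite leq_eqVlt => /orP [/eqP -> //| h].
rewrite SS_S; apply: le_trans (IH h) _; rewrite lerDl; exact: bb_ge0.
Qed.

Lemma pbb n (v : 'I_n -> R) p : p%:R * bb v p <= SS v p.
Proof.
rewrite /SS; have -> : p%:R * bb v p = \sum_(i < p) bb v p by rewrite sumr_const card_ord mulr_natl.
apply: ler_sum => i _; apply: bb_mono; exact: ltnW.
Qed.

Lemma SS_conc n (v : 'I_n -> R) p q : (p <= q)%N -> p%:R * SS v q <= q%:R * SS v p.
Proof.
move=> hpq; elim: q hpq => [|q IH]; first by rewrite leqn0 => /eqP ->; rewrite !mul0r.
rewrite leq_eqVlt => /orP [/eqP -> //| h].
have {}IH := IH h.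
have h1 : q%:R * SS v q.+1 <= q.+1%:R * SS v q.
  by rewrite SS_S -natr1; have := pbb v q; nra.
case: (posnP q) => [q0|hq].
  by move: h; rewrite q0 ltnS leqn0 => /eqP ->; rewrite !mul0r mulr_ge0 // SS_ge0.
have hq' : 0 < q%:R :> R by rewrite ltr0n.
rewrite -(ler_pM2l hq').
have hp : 0 <= p%:R :> R by [].
have hS := SS_ge0 v q.
have hq1 : 0 <= q.+1%:R :> R by [].
nra.
Qed.


Lemma count_sa n (v : 'I_n -> R) :
  count (fun x : R => x != 0) (sorted_abs v) = #|[pred i | v i != 0]|.
Proof.
rewrite (permP (sa_perm v)) count_map -count_enum_card; apply: eq_count => i /=.
by rewrite normr_eq0.
Qed.

Lemma sa_zero k n (v : 'I_n -> R) j : sparse k v -> (k <= j)%N ->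
  nth 0 (sorted_abs v) j = 0.
Proof.
rewrite /sparse /= -count_sa => hc hkj.
case: (ltnP j (size (sorted_abs v))) => hj; last by rewrite nth_default.
apply/eqP; apply: contraTT hc => hx; rewrite -ltnNge.
set s := sorted_abs v.
have hx0 : 0 < nth 0 s j by rewrite lt_def hx sa_ge0.
have ht : all (fun x : R => x != 0) (take j.+1 s).
  apply/(all_nthP 0) => i; rewrite size_takel // => hi.
  rewrite nth_take //; apply: lt0r_neq0; apply: lt_le_trans hx0 _; exact: sa_mono.
rewrite -(cat_take_drop j.+1 s) count_cat.
move: ht; rewrite all_count => /eqP ->; rewrite size_takel //.
exact: leq_trans (leq_addr _ _).
Qed.

Lemma sum_tail (f : nat -> R) m m' : (m <= m')%N -> (forall i, (m <= i)%N -> f i = 0) ->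
  \sum_(i < m') f i = \sum_(i < m) f i.
Proof.
move=> hm hf; rewrite -!(big_mkord xpredT f) (big_cat_nat (n:=m)) //= [X in _ + X]big_nat_cond [X in _ + X]big1 ?addr0 //.
by move=> i /andP [/andP [h _] _]; apply: hf.
Qed.

Lemma sum_all n (v : 'I_n -> R) : \sum_(i < size (sorted_abs v)) bb v i = \sum_(i < n) v i ^+ 2.
Proof.
rewrite /bb -(big_mkord xpredT (fun i => nth 0 (sorted_abs v) i ^+ 2)).
rewrite -(big_nth 0 xpredT (fun x : R => x ^+ 2)) (perm_big _ (sa_perm v)) /= big_map.
rewrite big_enum /=; apply: eq_bigr => i _; by rewrite real_normK ?num_real.
Qed.

Lemma SS_k k n (v : 'I_n -> R) : unit_vec v -> sparse k v -> SS v k = 1.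
Proof.
move=> hu hs; rewrite -hu -sum_all /SS.
case: (leqP k (size (sorted_abs v))) => h.
  rewrite (sum_tail h) // => i hi; by rewrite /bb (sa_zero hs hi) expr0n.
symmetry; rewrite (sum_tail (ltnW h)) // => i hi; by rewrite /bb nth_default // expr0n.
Qed.


Lemma key (p q k : nat) (Sp Sq : R) : (1 <= p)%N -> 0 < Sp -> 0 < Sq ->
  p%:R <= k%:R * Sp -> ((q <= p)%N -> Sq <= Sp) -> ((p <= q)%N -> p%:R * Sq <= q%:R * Sp) ->
  p%:R * Sp^-1 ^+ 2 <= Num.max (q%:R ^+ 2 * Sq^-1 ^+ 2) (k%:R * Sq^-1).
Proof.
move=> hp hSp hSq hpk h1 h2.
have hx : Sp * Sp^-1 = 1 by rewrite mulfV // gt_eqF.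
have hy : Sq * Sq^-1 = 1 by rewrite mulfV // gt_eqF.
have x0 : 0 < Sp^-1 by rewrite invr_gt0.
have y0 : 0 < Sq^-1 by rewrite invr_gt0.
set x := Sp^-1 in hx x0 *; set y := Sq^-1 in hy y0 *.
have p1 : 1 <= p%:R :> R by rewrite ler1n.
have k0 : 0 <= k%:R :> R by [].
have q0 : 0 <= q%:R :> R by [].
case: (leqP q p) => hqp.
  rewrite le_max; apply/orP; right.
  have hxy : x <= y by rewrite /x /y lef_pV2 ?posrE // h1.
  have hpx : p%:R * x <= k%:R by nra.
  nra.
rewrite le_max; apply/orP; left.
have {}h2 := h2 (ltnW hqp).
have hpx : p%:R * x <= q%:R * y by nra.
have : (p%:R * x) ^+ 2 <= (q%:R * y) ^+ 2 by rewrite ler_sqr // ?nnegrE; nra.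
nra.
Qed.

Lemma part1 (k n : nat) (v : 'I_n -> R) :
      (1 <= k)%N -> unit_vec v -> sparse k v ->
      Aval k (strfun v) <= Bval k (strfun v).
Proof.
move=> hk hu hs.
have Sk := SS_k hu hs.
have hpk p : (p <= k)%N -> p%:R <= k%:R * SS v p.
  by move=> hp; have := SS_conc v hp; rewrite Sk mulr1.
have hpos p : (1 <= p <= k)%N -> 0 < SS v p.
  case/andP => h1 h2; have := hpk p h2.
  have : 1 <= p%:R :> R by rewrite ler1n.
  have := SS_ge0 v p; move=> a b c.
  rewrite lt_def; apply/andP; split => //; apply/eqP => e; move: c; rewrite e mulr0; lra.
have term p q : (1 <= p <= k)%N -> (1 <= q <= k)%N ->
    p%:R * strfun v p ^+ 2 <= Num.max (q%:R ^+ 2 * strfun v q ^+ 2) (k%:R * strfun v q).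
  move=> hp hq; apply: key.
  - by case/andP: hp.
  - exact: hpos.
  - exact: hpos.
  - by apply: hpk; case/andP: hp.
  - exact: SS_mono.
  - move=> hpq; exact: SS_conc.
have hB p : (1 <= p <= k)%N -> p%:R * strfun v p ^+ 2 <= Bval k (strfun v).
  move=> hp; rewrite /Bval big_seq.
  apply: (big_ind (fun y => p%:R * strfun v p ^+ 2 <= y)).
  - by apply: term => //; rewrite leqnn.
  - by move=> x y hx hy; rewrite le_min hx hy.
  - by move=> i; rewrite mem_index_iota ltnS => hi; apply: term.
rewrite /Aval big_seq; apply: (big_ind (fun y => y <= Bval k (strfun v))).
- by apply: hB; rewrite leqnn.
- by move=> x y hx hy; rewrite ge_max hx hy.
- by move=> i; rewrite mem_index_iota ltnS => hi; apply: hB.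
Qed.


Definition dd (m : nat) : R := Num.sqrt (m%:R).
Definition ww (k j : nat) : R := Num.sqrt ((dd j.+1 - dd j) / dd k).
Definition vv (k : nat) : 'I_k -> R := fun i => ww k i.
Arguments vv : clear implicits.

Lemma dd_ge0 m : 0 <= dd m. Proof. exact: sqrtr_ge0. Qed.
Lemma dd_sq m : dd m ^+ 2 = m%:R. Proof. by rewrite /dd sqr_sqrtr. Qed.
Lemma dd_mono m : dd m <= dd m.+1. Proof. by rewrite /dd ler_sqrt // ler_nat. Qed.
Lemma dd_pos m : (0 < m)%N -> 0 < dd m.
Proof. by move=> h; rewrite /dd sqrtr_gt0 ltr0n. Qed.

Lemma dd_conc j : dd j.+2 - dd j.+1 <= dd j.+1 - dd j.
Proof.
have a0 := dd_ge0 j; have b0 := dd_ge0 j.+1; have c0 := dd_ge0 j.+2.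
have ha := dd_sq j; have hb := dd_sq j.+1; have hc := dd_sq j.+2.
rewrite -!natr1 in hb hc.
set a := dd j in a0 ha *; set b := dd j.+1 in b0 hb *; set c := dd j.+2 in c0 hc *.
set t := j%:R in ha hb hc.
have t0 : 0 <= t by [].
have hac : a * c <= t + 1.
  have : (a * c) ^+ 2 <= (t + 1) ^+ 2 by rewrite exprMn ha hc; nra.
  rewrite ler_sqr // ?nnegrE; nra.
have : (a + c) ^+ 2 <= (2 * b) ^+ 2 by nra.
rewrite ler_sqr // ?nnegrE; nra.
Qed.

Lemma bw_ge0 k j : 0 <= (dd j.+1 - dd j) / dd k.
Proof. by apply: divr_ge0; rewrite ?subr_ge0 ?dd_mono ?dd_ge0. Qed.

Lemma ww_sq k j : ww k j ^+ 2 = (dd j.+1 - dd j) / dd k.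
Proof. by rewrite /ww sqr_sqrtr // bw_ge0. Qed.

Lemma ww_mono k j : ww k j.+1 <= ww k j.
Proof.
rewrite /ww ler_sqrt ?bw_ge0 //; apply: ler_wpM2r; first by rewrite invr_ge0 dd_ge0.
exact: dd_conc.
Qed.

Lemma path_iota (r : rel nat) m n : (forall i, r i i.+1) -> path r m (iota m.+1 n).
Proof. move=> h; elim: n m => [|n IH] m //=; by rewrite h IH. Qed.

Lemma sa_vv k : sorted_abs (vv k) = map (ww k) (iota 0 k).
Proof.
rewrite /sorted_abs.
have -> : [seq `|vv k i| | i <- enum 'I_k] = map (ww k) (iota 0 k).
  rewrite -val_enum_ord -map_comp; apply: eq_map => i /=.
  by rewrite /vv ger0_norm // sqrtr_ge0.
rewrite sorted_sort //.
  by move=> x y z /= h1 h2; exact: le_trans h2 h1.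
rewrite sorted_map; case: k => //= k; apply: path_iota => i /=; exact: ww_mono.
Qed.

Lemma sum_ww k p : \sum_(i < p) ww k i ^+ 2 = dd p / dd k.
Proof.
under eq_bigr => i _ do rewrite ww_sq.
rewrite -mulr_suml; congr (_ * _).
rewrite -(big_mkord xpredT (fun i => dd i.+1 - dd i)) telescope_sumr //.
by rewrite /dd sqrtr0 subr0.
Qed.

Lemma str_vv k p : (1 <= p <= k)%N -> strfun (vv k) p = dd k / dd p.
Proof.
case/andP => h1 h2; rewrite /strfun sa_vv.
have -> : \sum_(i < p) nth 0 [seq ww k i | i <- iota 0 k] i ^+ 2 = \sum_(i < p) ww k i ^+ 2.
  apply: eq_bigr => i _; rewrite (nth_map 0%N) ?size_iota ?nth_iota //;
  exact: leq_trans (ltn_ord i) h2.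
by rewrite sum_ww invf_div.
Qed.


Lemma sq_ratio k p : (0 < p)%N -> (dd k / dd p) ^+ 2 = k%:R / p%:R.
Proof. by move=> hp; rewrite expr_div_n !dd_sq. Qed.

Lemma A_vv k : (1 <= k)%N -> Aval k (strfun (vv k)) = k%:R.
Proof.
move=> hk.
have t p : (1 <= p <= k)%N -> p%:R * strfun (vv k) p ^+ 2 = k%:R.
  move=> hp; rewrite str_vv // sq_ratio; last by case/andP: hp.
  rewrite mulrCA mulfV ?mulr1 // pnatr_eq0 -lt0n; by case/andP: hp.
rewrite /Aval big_seq; apply: (big_ind (fun y => y = k%:R)).
- by apply: t; rewrite leqnn.
- by move=> x y -> ->; rewrite maxxx.
- by move=> i; rewrite mem_index_iota ltnS => hi; apply: t.
Qed.

Lemma B_vv k (M : R) : 1 <= M -> M ^+ 3 < k%:R -> (1 <= k)%N ->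
  M * k%:R <= Bval k (strfun (vv k)).
Proof.
move=> hM hMk hk.
have t p : (1 <= p <= k)%N ->
    M * k%:R <= Num.max (p%:R ^+ 2 * strfun (vv k) p ^+ 2) (k%:R * strfun (vv k) p).
  case/andP => h1 h2; rewrite str_vv ?h1 ?h2 // sq_ratio //.
  have p0 : 0 < p%:R :> R by rewrite ltr0n.
  have k0 : 0 < k%:R :> R by rewrite ltr0n.
  rewrite le_max; apply/orP; case: (leP M p%:R) => hMp.
    left; have -> : p%:R ^+ 2 * (k%:R / p%:R) = p%:R * k%:R :> R.
      by rewrite expr2 -mulrA (mulrCA p%:R k%:R) mulfV ?gt_eqF // mulr1.
    nra.
  right; rewrite [M * _]mulrC ler_pM2l // ler_pdivlMr ?dd_pos //.
  have : (M * dd p) ^+ 2 <= dd k ^+ 2.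
    rewrite exprMn !dd_sq; have : M ^+ 2 * p%:R <= M ^+ 3.
      rewrite [M ^+ 3]exprS mulrC ler_pM2r //; last by apply: exprn_gt0; lra.
      exact: ltW.
    move=> h; apply: le_trans h _; exact: ltW.
  rewrite ler_sqr // nnegrE ?dd_ge0 // mulr_ge0 ?dd_ge0 //; lra.
rewrite /Bval big_seq; apply: (big_ind (fun y => M * k%:R <= y)).
- by apply: t; rewrite leqnn.
- by move=> x y hx hy; rewrite le_min hx hy.
- by move=> i; rewrite mem_index_iota ltnS => hi; apply: t.
Qed.

End P1.

Theorem theorem3 (R : realType) :
  (forall (k n : nat) (v : 'I_n -> R),
      (1 <= k)%N -> unit_vec v -> sparse k v ->
      Aval k (strfun v) <= Bval k (strfun v))
  /\
  (exists (n : nat -> nat) (v : forall k : nat, 'I_(n k) -> R),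
      (forall k : nat, (1 <= k)%N -> unit_vec (v k) /\ sparse k (v k)) /\
      (fun k : nat => Bval k (strfun (v k)) / Aval k (strfun (v k))) @ \oo --> +oo).
Proof.
split; first by move=> k n v; exact: part1.
exists id, (@vv R); split.
  move=> k hk; split.
    by rewrite /unit_vec sum_ww divff // gt_eqF // dd_pos.
  by rewrite /sparse /=; apply: leq_trans (max_card _) _; rewrite card_ord.
apply/cvgryPge => M.
set M' := Num.max M 1.
have hM' : 1 <= M' by rewrite le_max lexx orbT.
have hMM : M <= M' by rewrite le_max lexx.
exists (Num.Def.trunc (M' ^+ 3)).+1 => //= k hk.
have hk1 : (1 <= k)%N by apply: leq_trans hk.
have hkM : M' ^+ 3 < k%:R.
  apply: lt_le_trans (truncnS_gt _) _; by rewrite ler_nat.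
rewrite A_vv // ler_pdivlMr ?ltr0n //.
apply: le_trans (B_vv hM' hkM hk1).
by rewrite ler_pM2r ?ltr0n.
Qed.
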